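(* Let $y,l,u\in\mathcal{R}(\mathbb{R}^{+},\mathbb{R})$ be such that $l\leq u$, $l_0\leq y_0\leq u_0$, and $\inf_{s\leq t}(u_s-l_s)>0$ for every $t\geq 0$. Let $(x,k)$ with $k=\phi^1-\phi^2$ and $(\tilde{x},\tilde{k})$ with $\tilde{k}=\tilde{\phi}^1-\tilde{\phi}^2$ be two solutions of the reflection problem $RP^u_l(y)$. Then: (i) $\{t:\Delta^{+}\phi^1_t>0\}\cap\{t:\Delta^{+}\phi^2_t>0\}=\emptyset$; (ii) $\{t:\Delta^{+}\phi^1_t>0\}=\{t:\Delta^{+}\tilde{\phi}^1_t>0\}$ and $\{t:\Delta^{+}\phi^2_t>0\}=\{t:\Delta^{+}\tilde{\phi}^2_t>0\}$.
   Context: A function $f:\mathbb{R}^+=[0,\infty)\to\mathbb{R}$ is regulated if it has a left limit $f_{t^-}$ at every $t>0$ and a right limit $f_{t^+}$ at every $t\geq0$; $\mathcal{R}(\mathbb{R}^{+},\mathbb{R})$ is the set of regulated functions. Write $\Delta^+f_t=f_{t^+}-f_t$, $\Delta^-f_t=f_t-f_{t^-}$, $a\wedge b=\min(a,b)$, $a\vee b=\max(a,b)$. A regulated function $\phi$ of bounded variation (on every $[0,t]$) decomposes as $\phi_t=\phi^c_t+\sum_{0<s\leq t}\Delta^-\phi_s+\sum_{0\leq s<t}\Delta^+\phi_s$ with $\phi^c$ continuous; its right-continuous part is $\phi^r_t=\phi^c_t+\sum_{0<s\leq t}\Delta^-\phi_s$. Reflection problem $RP^u_l(y)$: for $y,l,u\in\mathcal{R}(\mathbb{R}^{+},\mathbb{R})$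 with $l_0\leq y_0\leq u_0$, a pair $(x,k)$ of regulated functions is a solution if there exist $\phi^1,\phi^2$ such that: (i) $x=y+k=y+\phi^1-\phi^2$; (ii) $l\leq x\leq u$; (iii) $\phi^1,\phi^2$ are non-decreasing with $\phi^1_0=\phi^2_0=0$; (iv) $\int_{[0,\infty[}\big((x_s-l_s)\wedge(x_{s^+}-l_{s^+})\big)\,d\phi^{1,r}_s=\int_{[0,\infty[}\big((u_s-x_s)\wedge(u_{s^+}-x_{s^+})\big)\,d\phi^{2,r}_s=0$; (v) for every $t\geq0$, $\sum_{s\leq t}(x_{s^+}-l_{s^+})\Delta^+\phi^1_s=\sum_{s\leq t}(u_s-x_s)\Delta^+\phi^1_s=0$ and $\sum_{s\leq t}(u_{s^+}-x_{s^+})\Delta^+\phi^2_s=\sum_{s\leq t}(x_s-l_s)\Delta^+\phi^2_s=0$. Here $\phi^{i,r}$ is the right-continuous part of $\phi^i$. *)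

(* Defs.v *)
From HB Require Import structures.
From mathcomp Require Import all_boot all_order all_algebra.
From mathcomp Require Import all_classical all_reals all_analysis.
Set Implicit Arguments. Unset Strict Implicit. Unset Printing Implicit Defensive.
Import Order.TTheory GRing.Theory Num.Theory.
Import numFieldNormedType.Exports.
Local Open Scope classical_set_scope.
Local Open Scope ring_scope.

Section Defs.
Variable R : realType.

(* Functions on R^+ = [0,oo) are represented as functions R -> R whose
   values on negative reals are irrelevant. *)

Definition itv_co (t : R) : set R := `[0, t[.
Definition itv_cc (t : R) : set R := `[0, t].
Definition itv_pos : set R := `[0, +oo[.

Definition regulated (f : R -> R) : Prop :=
  (forall t, 0 <= t -> cvg (f @ at_right t)) /\
  (forall t, 0 < t -> cvg (f @ at_left t)).

Definition rlim (f : R -> R) (t : R) : R := lim (f @ at_right t).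

Definition dplus (f : R -> R) (t : R) : R := rlim f t - f t.

Definition nondecr0 (f : R -> R) : Prop :=
  forall s t, 0 <= s -> s <= t -> f s <= f t.

(* right-continuous part of a non-decreasing phi with phi_0 = 0:
   phi^r_t = phi^c_t + sum_{0<s<=t} Delta^- phi_s
           = phi_t - sum_{0<=s<t} Delta^+ phi_s   (t >= 0),
   extended by 0 on the negative half-line. *)
Definition rcpart (phi : R -> R) (t : R) : R :=
  if t < 0 then 0
  else phi t - fine (\esum_(s in (itv_co t)) (dplus phi s)%:E)%E.

Definition mkcum (F : R -> R) (H1 : {homo F : x y / x <= y})
  (H2 : forall x, F @ at_right x --> F x) : cumulative R R :=
  HB.pack F (isCumulative.Build R _ R F H1 H2).

Definition stieltjes_int_zero (F : R -> R) (g : R -> R) : Prop :=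
  exists (H1 : {homo F : x y / x <= y})
         (H2 : forall x, F @ at_right x --> F x),
    (\int[lebesgue_stieltjes_measure (mkcum H1 H2)]_(s in itv_pos) (g s)%:E
      = 0)%E.

Definition sum_upto_zero (h : R -> R) (t : R) : Prop :=
  (\esum_(s in (itv_cc t)) (h s)%:E = 0)%E.

Definition RP_sol (y l u x k phi1 phi2 : R -> R) : Prop :=
  (regulated x /\ regulated k) /\
  (forall t, 0 <= t -> x t = y t + k t /\ k t = phi1 t - phi2 t) /\
  (forall t, 0 <= t -> l t <= x t /\ x t <= u t) /\
  (nondecr0 phi1 /\ nondecr0 phi2 /\ phi1 0 = 0 /\ phi2 0 = 0) /\
  (stieltjes_int_zero (rcpart phi1)
     (fun s => Num.min (x s - l s) (rlim x s - rlim l s)) /\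
   stieltjes_int_zero (rcpart phi2)
     (fun s => Num.min (u s - x s) (rlim u s - rlim x s))) /\
  (forall t, 0 <= t ->
     sum_upto_zero (fun s => (rlim x s - rlim l s) * dplus phi1 s) t /\
     sum_upto_zero (fun s => (u s - x s) * dplus phi1 s) t /\
     sum_upto_zero (fun s => (rlim u s - rlim x s) * dplus phi2 s) t /\
     sum_upto_zero (fun s => (x s - l s) * dplus phi2 s) t).

Definition jumpset (phi : R -> R) : set R :=
  [set t | 0 <= t /\ 0 < dplus phi t].

End Defs.

(* Main.v *)
Require Import Defs.
From HB Require Import structures.
From mathcomp Require Import all_boot all_order all_algebra.
From mathcomp Require Import all_classical all_reals all_analysis.
Import Order.TTheory GRing.Theory Num.Theory.
Import numFieldNormedType.Exports.
Local Open Scope classical_set_scope.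
Local Open Scope ring_scope.
Set Implicit Arguments.
From mathcomp Require Import lra.

Section H.
Variable R : realType.

Lemma sum0_le (h : R -> R) t s : sum_upto_zero h t -> 0 <= s -> s <= t -> h s <= 0.
Proof.
rewrite /sum_upto_zero => H s0 st.
have : ((h s)%:E <= \esum_(i in itv_cc t) (h i)%:E)%E.
  apply: esum_ge; exists [set s]; last by rewrite fsbig_set1.
  split; first exact: finite_set1.
  by move=> z ->; rewrite /itv_cc /= in_itv /= s0 st.
by rewrite H lee_fin.
Qed.

Lemma mono_cvg (phi : R -> R) t : nondecr0 phi -> 0 <= t -> cvg (phi @ at_right t).
Proof.
move=> nd t0; apply: (@nondecreasing_at_right_is_cvgr R phi t).
  near=> b; move=> r s; rewrite !in_itv /= => /andP[tr _] /andP[ts _] rs.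
  by apply: nd => //; rewrite (le_trans t0) // ltW.
near=> b; exists (phi t) => z [r]; rewrite /= in_itv /= => /andP[tr _] <-.
by apply: nd => //; apply: ltW.
Unshelve. all: by end_near. Qed.

Lemma mono_dplus (phi : R -> R) t : nondecr0 phi -> 0 <= t -> 0 <= dplus phi t.
Proof.
move=> nd t0; rewrite /dplus subr_ge0 /rlim.
apply: limr_ge; first exact: mono_cvg.
near=> s; apply: nd => //.
Unshelve. all: by end_near. Qed.

Lemma rlim_le (f g : R -> R) t : cvg (f @ at_right t) -> cvg (g @ at_right t) ->
  (forall s, t < s -> f s <= g s) -> rlim f t <= rlim g t.
Proof.
move=> cf cg fg; apply: ler_lim => //.
near=> s; apply: fg; near: s; exact: nbhs_right_gt.
Unshelve. all: by end_near. Qed.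

Lemma rlim_lin (x y p q : R -> R) t : 0 <= t ->
  (forall s, 0 <= s -> x s = y s + (p s - q s)) ->
  cvg (y @ at_right t) -> cvg (p @ at_right t) -> cvg (q @ at_right t) ->
  rlim x t = rlim y t + (rlim p t - rlim q t).
Proof.
move=> t0 E cy cp cq; rewrite /rlim; apply: cvg_lim => //.
have : (y \+ (p \- q)) @ at_right t --> lim (y @ at_right t) + (lim (p @ at_right t) - lim (q @ at_right t)).
  by apply: cvgD => //; apply: cvgB.
apply: cvg_trans; apply: near_eq_cvg.
near=> s; rewrite /= E //; apply: ltW; rewrite (le_lt_trans t0) //.
Unshelve. all: by end_near. Qed.

Lemma disj (y l u x k p1 p2 : R -> R) :
  (forall t, 0 <= t -> l t <= u t) ->
  (forall t, 0 <= t -> 0 < inf [set u s - l s | s in `[0, t]]) ->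
  RP_sol y l u x k p1 p2 -> jumpset p1 `&` jumpset p2 = set0.
Proof.
move=> lu hinf [[rx rk] [E [B [[nd1 [nd2 [_ _]]] [_ V]]]]].
apply/seteqP; split => // t [[t0 j1] [_ j2]].
have [_ [V2 [_ V4]]] := V t t0.
have h1 := @sum0_le _ t t V2 t0 (lexx t).
have h2 := @sum0_le _ t t V4 t0 (lexx t).
rewrite /= pmulr_lle0 // in h1; rewrite /= pmulr_lle0 // in h2.
have hi := hinf t t0.
have : inf [set u s - l s | s in `[0, t]] <= u t - l t.
  apply: inf_lbound.
    exists 0 => z [s]; rewrite /= in_itv /= => /andP[s0 _] <-.
    by rewrite subr_ge0 lu.
  by exists t => //; rewrite /= in_itv /= t0 lexx.
move=> hle; have := lt_le_trans hi hle.
have [hx1 hx2] := B t t0.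
move=> h; exfalso; move: h; apply/negP; rewrite -leNgt; lra.
Qed.

Lemma sub12 (y l u x k p1 p2 xt kt q1 q2 : R -> R) :
  regulated y -> regulated l -> regulated u ->
  (forall t, 0 <= t -> l t <= u t) ->
  (forall t, 0 <= t -> 0 < inf [set u s - l s | s in `[0, t]]) ->
  RP_sol y l u x k p1 p2 -> RP_sol y l u xt kt q1 q2 ->
  jumpset p1 `<=` jumpset q1 /\ jumpset p2 `<=` jumpset q2.
Proof.
move=> ry rl ru lu hinf S1 S2.
have D := disj lu hinf S1.
move: S1 S2 => [[rx rk] [E [B [[nd1 [nd2 [_ _]]] [_ V]]]]]
  [[rxt rkt] [Et [Bt [[ndt1 [ndt2 [_ _]]] [_ Vt]]]]].
have Ex : forall s, 0 <= s -> x s = y s + (p1 s - p2 s).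
  by move=> s s0; have [-> ->] := E s s0.
have Ext : forall s, 0 <= s -> xt s = y s + (q1 s - q2 s).
  by move=> s s0; have [-> ->] := Et s s0.
have notin : forall t, 0 <= t -> jumpset p1 t -> jumpset p2 t -> False.
  by move=> t t0 a b; have : (jumpset p1 `&` jumpset p2) t by []; rewrite D.
split=> t [t0 j] ; split => //; rewrite ltNge; apply/negP => hq.
- have [V1 [V2 _]] := V t t0.
  have h1 := @sum0_le _ t t V1 t0 (lexx t).
  have h2 := @sum0_le _ t t V2 t0 (lexx t).
  rewrite /= pmulr_lle0 // in h1; rewrite /= pmulr_lle0 // in h2.
  have d2 : dplus p2 t <= 0.
    by rewrite leNgt; apply/negP => h; apply: (notin t).
  have e2 := mono_dplus t ndt2 t0.
  have L1 := rlim_lin x t0 Ex (ry.1 t t0) (mono_cvg t nd1 t0) (mono_cvg t nd2 t0).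
  have L2 := rlim_lin xt t0 Ext (ry.1 t t0) (mono_cvg t ndt1 t0) (mono_cvg t ndt2 t0).
  have L3 : rlim l t <= rlim xt t.
    apply: rlim_le; [exact: rl.1|exact: rxt.1|].
    by move=> s ts; have [] := Bt s (le_trans t0 (ltW ts)).
  have [_ bt] := Bt t t0.
  have ex0 := Ex t t0; have ext0 := Ext t t0.
  move: j hq d2 e2; rewrite /dplus; lra.
- have [_ [_ [V3 V4]]] := V t t0.
  have h1 := @sum0_le _ t t V3 t0 (lexx t).
  have h2 := @sum0_le _ t t V4 t0 (lexx t).
  rewrite /= pmulr_lle0 // in h1; rewrite /= pmulr_lle0 // in h2.
  have d1 : dplus p1 t <= 0.
    by rewrite leNgt; apply/negP => h; apply: (notin t).
  have e1 := mono_dplus t ndt1 t0.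
  have L1 := rlim_lin x t0 Ex (ry.1 t t0) (mono_cvg t nd1 t0) (mono_cvg t nd2 t0).
  have L2 := rlim_lin xt t0 Ext (ry.1 t t0) (mono_cvg t ndt1 t0) (mono_cvg t ndt2 t0).
  have L3 : rlim xt t <= rlim u t.
    apply: rlim_le; [exact: rxt.1|exact: ru.1|].
    by move=> s ts; have [] := Bt s (le_trans t0 (ltW ts)).
  have [bt _] := Bt t t0.
  have ex0 := Ex t t0; have ext0 := Ext t t0.
  move: j hq d1 e1; rewrite /dplus; lra.
Qed.
End H.

Unset Implicit Arguments.

Theorem lemma1 (R : realType) (y l u x k phi1 phi2 xt kt phit1 phit2 : R -> R) :
  regulated y -> regulated l -> regulated u ->
  (forall t, 0 <= t -> l t <= u t) ->
  l 0 <= y 0 -> y 0 <= u 0 ->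
  (forall t, 0 <= t -> 0 < inf [set u s - l s | s in `[0, t]]) ->
  RP_sol y l u x k phi1 phi2 ->
  RP_sol y l u xt kt phit1 phit2 ->
  (jumpset phi1 `&` jumpset phi2 = set0) /\
  (jumpset phi1 = jumpset phit1 /\ jumpset phi2 = jumpset phit2).
Proof.
move=> ry rl ru lu _ _ hinf S1 S2.
split; first exact: disj lu hinf S1.
have [a1 a2] := sub12 ry rl ru lu hinf S1 S2.
have [b1 b2] := sub12 ry rl ru lu hinf S2 S1.
by split; apply/seteqP; split.
Qed.
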